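(* Let $(M,g)$ be a Riemannian manifold and $F_1,\dots,F_k:M\to\mathbb{R}$ smooth with $\det\Sigma_{(F_1,\dots,F_k)}^{(F_1,\dots,F_k)}\neq0$ everywhere on $M$. Then for every $\alpha\in\Omega^1(M)$ and every $X_0\in\mathcal{X}_{tan}(M)$, $$\mathbf{T}(\alpha,\flat_T(X_0))=\alpha(X_0).$$
   Context: $\langle\cdot,\cdot\rangle$ is the inner product of $g$, $\nabla$ the gradient, $g^{-1}$ the inverse metric as a contravariant 2-tensor, $\flat_g(X)=g(X,\cdot)$. $\Sigma_{(g_1,\dots,g_s)}^{(f_1,\dots,f_r)}$ is the $r\times s$ matrix with entry $\langle\nabla g_b,\nabla f_a\rangle$ in row $a$, column $b$; $\widehat{\cdot}$ denotes omission; empty determinant is $1$. $\nabla F_i\otimes\nabla F_j(\alpha,\beta):=\alpha(\nabla F_i)\beta(\nabla F_j)$ and $$\mathbf{T}:=\sum_{i,j=1}^k(-1)^{i+j+1}\det\Sigma_{(F_1,\dots,\widehat{F_i},\dots,F_k)}^{(F_1,\dots,\widehat{F_j},\dots,F_k)}\nabla F_i\otimes\nabla F_j+\det\Sigma_{(F_1,\dots,F_k)}^{(F_1,\dots,F_k)}g^{-1}.$$ $\mathcal{X}_{tan}(M)=\{X\in\mathcal{X}(M)\mid dF_s(X)=0,\ s=1,\dots,k\}$, $\Omega^1_{tan}(M)=\{\alpha\in\Omega^1(M)\mid\alpha(\nabla F_s)=0,\ s=1,\dots,k\}$. The map $\sharp_T(\alpha):=\mathbf{T}(\alpha,\cdot)$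 restricts to a bijection $\Omega^1_{tan}(M)\to\mathcal{X}_{tan}(M)$, and $\flat_T:\mathcal{X}_{tan}(M)\to\Omega^1_{tan}(M)$ is its inverse; explicitly $\flat_T(X)=\frac{1}{\det\Sigma_{(F_1,\dots,F_k)}^{(F_1,\dots,F_k)}}\flat_g(X)$. *)

(* Defs.v *)
(* Pointwise (fiberwise) model of the tensors on a Riemannian
   manifold. *)
From HB Require Import structures.
From mathcomp Require Import all_boot all_order all_algebra.
Set Implicit Arguments. Unset Strict Implicit. Unset Printing Implicit Defensive.
Import Order.TTheory GRing.Theory Num.Theory.
Local Open Scope ring_scope.

Section Defs.
Variables (R : realFieldType) (n k : nat).

(* metric tensor g at a point: matrix of g in the (global) frame *)
Definition is_metric (G : 'M[R]_n) : Prop :=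
  G^T = G /\ forall v : 'cV[R]_n, v != 0 -> 0 < (v^T *m G *m v) 0 0.

Definition ginner (G : 'M[R]_n) (u v : 'cV[R]_n) : R := (u^T *m G *m v) 0 0.

(* gradient of a function with differential dF (a covector) *)
Definition grad (G : 'M[R]_n) (dF : 'rV[R]_n) : 'cV[R]_n := invmx G *m dF^T.

Definition ginv (G : 'M[R]_n) (a b : 'rV[R]_n) : R := (a *m invmx G *m b^T) 0 0.

Definition ev (a : 'rV[R]_n) (X : 'cV[R]_n) : R := (a *m X) 0 0.

Definition flat_g (G : 'M[R]_n) (X : 'cV[R]_n) : 'rV[R]_n := (G *m X)^T.

Definition Sigma (G : 'M[R]_n) (dF : 'I_k -> 'rV[R]_n) : 'M[R]_k :=
  \matrix_(a, b) ginner G (grad G (dF b)) (grad G (dF a)).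

(* Sigma^{(F_1,..,^F_j,..,F_k)}_{(F_1,..,^F_i,..,F_k)}: delete row j and column i *)
Definition Sigma_minor (G : 'M[R]_n) (dF : 'I_k -> 'rV[R]_n) (i j : 'I_k)
  : 'M[R]_k.-1 := row' j (col' i (Sigma G dF)).

Definition Ttens (G : 'M[R]_n) (dF : 'I_k -> 'rV[R]_n) (a b : 'rV[R]_n) : R :=
  \sum_(i < k) \sum_(j < k)
     (-1) ^+ (i + j + 1) * \det (Sigma_minor G dF i j)
       * ev a (grad G (dF i)) * ev b (grad G (dF j))
  + \det (Sigma G dF) * ginv G a b.

Definition flat_T (G : 'M[R]_n) (dF : 'I_k -> 'rV[R]_n) (X : 'cV[R]_n)
  : 'rV[R]_n := (\det (Sigma G dF))^-1 *: flat_g G X.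

End Defs.

(* Main.v *)
Require Import Defs.
From HB Require Import structures.
From mathcomp Require Import all_boot all_order all_algebra.
Import Order.TTheory GRing.Theory Num.Theory.
Local Open Scope ring_scope.

Lemma metric_unit (R : realFieldType) (n : nat) (G : 'M[R]_n) :
  is_metric G -> G \in unitmx.
Proof.
move=> [hs hp]; rewrite unitmxE unitfE; apply/negP => /det0P [v v0 hv].
have := hp v^T; rewrite trmxK (negbTE (_ : v^T != 0)).
  by rewrite hv mul0mx mxE ltxx => /(_ isT).
by apply: contra v0 => /eqP h; apply/eqP; rewrite -[v]trmxK h trmx0.
Qed.

Theorem lemma4p5 (R : realFieldType) (n k : nat) (M : Type)
  (g : M -> 'M[R]_n) (dF : M -> 'I_k -> 'rV[R]_n)
  (hg : forall p : M, is_metric (g p))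
  (hdet : forall p : M, \det (Sigma (g p) (dF p)) != 0)
  (alpha : M -> 'rV[R]_n) (X0 : M -> 'cV[R]_n)
  (hX0 : forall (p : M) (s : 'I_k), ev (dF p s) (X0 p) = 0) :
  forall p : M,
    Ttens (g p) (dF p) (alpha p) (flat_T (g p) (dF p) (X0 p)) = ev (alpha p) (X0 p).
Proof.
move=> p; have hu := @metric_unit _ _ _ (hg p); have [hs _] := hg p.
set G := g p in hu hs *; set d := \det (Sigma G (dF p)).
have hd : d != 0 by exact: hdet.
rewrite /Ttens big1 ?add0r; last first.
  move=> i _; apply: big1 => j _.
  suff -> : ev (flat_T G (dF p) (X0 p)) (grad G (dF p j)) = 0 by rewrite mulr0.
  rewrite /ev /flat_T /flat_g /grad -scalemxAl trmx_mul hs -mulmxA.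
  rewrite (mulmxA G) mulmxV // mul1mx mxE -trmx_mul mxE.
  by have := hX0 p j; rewrite /ev => ->; rewrite mulr0.
rewrite /ginv /flat_T /flat_g /ev.
rewrite linearZ /= trmxK -scalemxAr mxE .
rewrite mulmxA -(mulmxA _ (invmx G)) mulVmx // mulmx1.
by rewrite mulrA mulfV // mul1r.
Qed.
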